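(* Let $\mathbf{a}=(a_0,a_1,\dots,a_n)$ be positive integers with $\sum_k \frac{1}{a_k}\ge 1$. Then the function $f_{\mathbf{a}}:\mathbb{R}_+\to\mathbb{Z}$, $$f_{\mathbf{a}}(x)=\sum_{k=0}^n\left(\left\lfloor \frac{x}{a_k}\right\rfloor+\left\lceil\frac{x}{a_k}\right\rceil\right)-\left(\lfloor x\rfloor+\lceil x\rceil\right),$$ attains a minimum, denoted $m(\mathbf{a})$. In particular, if $\mathbf{a}=(2,2,2,a_1,\dots,a_n)$ with $a_k$ positive integers and $n\ge 2$, then $m(\mathbf{a})\ge 2$. *)

(* Defs.v *)
From mathcomp Require Import all_boot all_order all_algebra.
From mathcomp Require Import reals.
Set Implicit Arguments. Unset Strict Implicit. Unset Printing Implicit Defensive.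
Import Order.TTheory GRing.Theory Num.Theory.
Local Open Scope ring_scope.

Definition f_a (R : realType) (a : seq nat) (x : R) : int :=
  \sum_(k <- a) (Num.floor (x / k%:R) + Num.ceil (x / k%:R))
  - (Num.floor x + Num.ceil x).

(* Main.v *)
Require Import Defs.
From mathcomp Require Import all_boot all_order all_algebra.
From mathcomp Require Import reals.
From mathcomp Require Import zify ring lra.
From Stdlib Require Import Classical.
Import Order.TTheory GRing.Theory Num.Theory.
Local Open Scope ring_scope.

Section H.
Variable R : realType.
Implicit Types (x y : R).

Lemma T_lb y : 2 * y - 1 <= ((Num.floor y + Num.ceil y)%:~R : R).
Proof.
have h1 := floorD1_gt y. have h2 := ceil_ge y.
rewrite intrD in h1; rewrite intrD. lra.
Qed.

Lemma T_ub y : ((Num.floor y + Num.ceil y)%:~R : R) <= 2 * y + 1.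
Proof.
have h1 := floor_le y. have h2 := ceilB1_lt y.
rewrite intrD. rewrite intrB in h2. lra.
Qed.

Lemma T_pos y : 0 < y -> (1 <= Num.floor y + Num.ceil y)%R.
Proof.
move=> hy.
have h1 : (0 <= Num.floor y)%R by rewrite floor_ge0 ltW.
have h2 : (0 < Num.ceil y)%R by rewrite ceil_gt0.
lia.
Qed.

Lemma sum_lb (a : seq nat) x :
  2 * x * \sum_(k <- a) (k%:R : R)^-1 - (size a)%:R <=
  ((\sum_(k <- a) (Num.floor (x / k%:R) + Num.ceil (x / k%:R)))%:~R : R).
Proof.
elim: a => [|k a IH]; first by rewrite !big_nil /= mulr0 subr0.
rewrite !big_cons intrD /= mulrDr -addn1 natrD.
have := T_lb (x / k%:R). rewrite /= mulrA. lra.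
Qed.

Lemma sum_pos (b : seq nat) x : 0 < x -> all (fun k => (0 < k)%N) b ->
  ((size b)%:Z <= \sum_(k <- b) (Num.floor (x / k%:R) + Num.ceil (x / k%:R)))%R.
Proof.
move=> hx; elim: b => [|k b IH]; first by rewrite big_nil.
rewrite /= big_cons => /andP [hk hb].
have := IH hb. have : 0 < x / k%:R by rewrite divr_gt0 // ltr0n.
move=> /T_pos h1 h2. rewrite -addn1 PoszD. move: h1 h2. set s := \sum_(_ <- _) _. set t := (_ + _)%R. lia.
Qed.

Lemma min_exists (P : R -> Prop) (g : R -> int) (lb : int) :
  (forall x, P x -> (lb <= g x)%R) -> forall x, P x ->
  exists2 x0, P x0 & forall y, P y -> (g x0 <= g y)%R.
Proof.
move=> hlb.
suff H : forall n : nat, forall x, P x -> (g x - lb <= n%:Z)%R ->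
  exists2 x0, P x0 & forall y, P y -> (g x0 <= g y)%R.
  move=> x Px; apply: (H `|g x - lb|%N x Px).
  have := hlb x Px. lia.
elim=> [|n IH] x Px hx.
  exists x => // y Py; have := hlb y Py; lia.
case: (classic (exists y, P y /\ (g y < g x)%R)) => [[y [Py hy]]|hn].
  apply: (IH y Py); lia.
exists x => // y Py; rewrite leNgt; apply/negP => h; apply: hn; by exists y.
Qed.

Lemma key x y : x = y * 2 ->
  (Num.floor x <= 2 * Num.floor y + 1)%R /\ (Num.ceil x <= 2 * Num.ceil y)%R.
Proof.
move=> ->; split.
  suff : (Num.floor (y * 2) < 2 * Num.floor y + 2)%R by lia.
  rewrite floor_lt_int.
  have := floorD1_gt y. rewrite !intrD intrM /=. lra.
rewrite ceil_le_int.
have := ceil_ge y. rewrite intrM /=. lra.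
Qed.

End H.

Theorem lemma5p6 (R : realType) :
  (* f_a attains a minimum on R_+ = (0, +oo) *)
  (forall a : seq nat,
     all (fun k => (0 < k)%N) a ->
     1 <= \sum_(k <- a) (k%:R : R)^-1 ->
     exists2 x0 : R, 0 < x0 & forall x : R, 0 < x -> f_a a x0 <= f_a a x) /\
  (* for a = (2,2,2,a_1,...,a_n), n >= 2, the minimum m(a) is >= 2 *)
  (forall b : seq nat,
     (2 <= size b)%N ->
     all (fun k => (0 < k)%N) b ->
     forall x : R, 0 < x -> 2 <= f_a [:: 2%N, 2%N, 2%N & b] x).
Proof.
split.
  move=> a _ hS.
  apply: (@min_exists R (fun x => 0 < x) (f_a a) (- (size a)%:Z - 1)); last exact: ltr01.
  move=> x hx; rewrite -(ler_int R) /f_a intrB.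
  have h1 := @sum_lb R a x. have h2 := @T_ub R x.
  have h3 : 2 * x <= 2 * x * \sum_(k <- a) (k%:R : R)^-1.
    by rewrite -{1}(mulr1 (2 * x)) ler_wpM2l // mulr_ge0 // ltW.
  rewrite intrB intrN /=. lra.
move=> b hsz hb x hx.
rewrite /f_a !big_cons.
have hB := @sum_pos R b x hx hb.
move: hB. set s := \sum_(_ <- _) _. move=> hB.
set y := (x / _).
have hy : x = y * 2 by rewrite /y divfK // pnatr_eq0.
have hy0 : 0 < y by rewrite /y divr_gt0 // ltr0n.
have hA := @T_pos R y hy0.
have [hf hc] := @key R x y hy.
move: hA hB hf hc; clearbody s y.
move: (Num.floor x) (Num.ceil x) (Num.floor y) (Num.ceil y) => a1 a2 a3 a4.
move=> *. lia.
Qed.
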